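(* Let $(S,V)$ be a complete semiring-semimodule pair, let $S'\subseteq S$ contain $0$ and $1$, let $n\ge1$, let $\Gamma$ be an alphabet, and let $M\in (S'^{n\times n})^{\Gamma^*\times\Gamma^*}$ be a pushdown transition matrix. Then for all $0\le l\le n$, the family $(z_p)_{p\in\Gamma}$ with $z_p=(M^{\omega,l})_p\in V^n$ is a solution of the linear system $$z_p=\sum_{p'\in\Gamma}(A_M)_{p,p'}\,z_{p'},\qquad p\in\Gamma.$$
   Context: A complete semiring-semimodule pair $(S,V)$ (in the sense of Ésik and Kuich, ''Modern Automata Theory'') consists of a complete starsemiring $S$ (arbitrary sums with infinite associativity/commutativity/distributivity laws, star $s^*=\sum_{j\ge0}s^j$) and a complete $S$-semimodule $V$, with infinite products $\prod_{j\ge1}s_j\in V$ of sequences in $S$ satisfying the axioms of that framework. $M\in (S'^{n\times n})^{\Gamma^*\times\Gamma^*}$ is a $\Gamma^*\times\Gamma^*$ matrix with $n\times n$ blocks over $S'$; it is a pushdown transition matrix if (i) for each $p\in\Gamma$ only finitely many blocks $M_{p,\pi}$ are nonzero, and (ii) $M_{\pi_1,\pi_2}=M_{p,\pi}$ if $\pi_1=p\pi'$, $\pi_2=\pi\pi'$ for some $p\in\Gamma$, $\pi,\pi'\in\Gamma^*$, and $0$ otherwise. $M^*=\sum_{m\ge0}M^m$ with blocks $(M^* )_{\pi,\pi'}$. Let $P_l=\{(j_1,j_2,\dots)\in\{1,\dots,n\}^\omega\mid j_t\le l\text{ for infinitely many }t\}$; $M^{\omega,l}\in (V^n)^{\Gamma^*}$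 is given by $((M^{\omega,l})_\pi)_i=\sum_{\pi_1,\pi_2,\ldots\in\Gamma^*}\sum_{(j_1,j_2,\ldots)\in P_l}(M_{\pi,\pi_1})_{i,j_1}(M_{\pi_1,\pi_2})_{j_1,j_2}\cdots$ (sum of weights of infinite paths from $(\pi,i)$ in the graph on $\Gamma^*\times\{1,\dots,n\}$ with adjacency matrix $M$ that visit states $\le l$ infinitely often). For $p,p'\in\Gamma$, $$(A_M)_{p,p'}=\sum_{\substack{\pi=p_1\dots p_k\in\Gamma^+,\ 1\le j\le k\\ p_j=p'}}M_{p,\pi}\,(M^* )_{p_1,\epsilon}\cdots(M^* )_{p_{j-1},\epsilon}\in S^{n\times n}.$$ *)

(* Defs.v *)
From mathcomp Require Import all_boot.
Set Implicit Arguments. Unset Strict Implicit. Unset Printing Implicit Defensive.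

(* Complete semirings (Esik--Kuich).  Index sets are types; a sum over *)
(* an index set I is  cs_sum I a.  The set-theoretic axioms (empty,    *)
(* singleton, two-element sums; infinite associativity over           *)
(* partitions) are rendered as: empty-type sums, unit sums, bool sums, *)
(* invariance under bijective reindexing, and sigma-type splitting.   *)
Record csemiring := CSemiring {
  cs_car :> Type;
  cs_add : cs_car -> cs_car -> cs_car;
  cs_mul : cs_car -> cs_car -> cs_car;
  cs_zero : cs_car;
  cs_one : cs_car;
  cs_addA : associative cs_add;
  cs_addC : commutative cs_add;
  cs_add0l : left_id cs_zero cs_add;
  cs_mulA : associative cs_mul;
  cs_mul1l : left_id cs_one cs_mul;
  cs_mul1r : right_id cs_one cs_mul;
  cs_mulDl : left_distributive cs_mul cs_add;
  cs_mulDr : right_distributive cs_mul cs_add;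
  cs_mul0l : left_zero cs_zero cs_mul;
  cs_mul0r : right_zero cs_zero cs_mul;
  cs_sum : forall I : Type, (I -> cs_car) -> cs_car;
  cs_sum_empty : forall (I : Type) (a : I -> cs_car), (I -> False) -> cs_sum a = cs_zero;
  cs_sum_unit : forall a : unit -> cs_car, cs_sum a = a tt;
  cs_sum_bool : forall a : bool -> cs_car, cs_sum a = cs_add (a true) (a false);
  cs_sum_bij : forall (I J : Type) (f : J -> I) (a : I -> cs_car),
      bijective f -> cs_sum (fun j => a (f j)) = cs_sum a;
  cs_sum_sigma : forall (J : Type) (K : J -> Type) (a : {j : J & K j} -> cs_car),
      cs_sum a = cs_sum (fun j => cs_sum (fun k : K j => a (existT _ j k)));
  cs_sum_mul : forall (I1 I2 : Type) (a : I1 -> cs_car) (b : I2 -> cs_car),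
      cs_mul (cs_sum a) (cs_sum b) = cs_sum (fun x : I1 * I2 => cs_mul (a x.1) (b x.2))
}.
Arguments cs_sum {c} I _.

Definition cs_lprod (S : csemiring) (l : seq S) : S := foldr (@cs_mul S) (@cs_one S) l.

Record cpair (S : csemiring) := CPair {
  cp_car :> Type;
  cp_add : cp_car -> cp_car -> cp_car;
  cp_zero : cp_car;
  cp_addA : associative cp_add;
  cp_addC : commutative cp_add;
  cp_add0l : left_id cp_zero cp_add;
  cp_act : S -> cp_car -> cp_car;
  cp_actDl : forall (s1 s2 : S) v, cp_act (cs_add s1 s2) v = cp_add (cp_act s1 v) (cp_act s2 v);
  cp_actDr : forall (s : S) v1 v2, cp_act s (cp_add v1 v2) = cp_add (cp_act s v1) (cp_act s v2);
  cp_actA : forall (s1 s2 : S) v, cp_act (cs_mul s1 s2) v = cp_act s1 (cp_act s2 v);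
  cp_act1 : forall v, cp_act (cs_one S) v = v;
  cp_act0l : forall v, cp_act (cs_zero S) v = cp_zero;
  cp_act0r : forall s, cp_act s cp_zero = cp_zero;
  cp_sum : forall I : Type, (I -> cp_car) -> cp_car;
  cp_sum_empty : forall (I : Type) (a : I -> cp_car), (I -> False) -> cp_sum a = cp_zero;
  cp_sum_unit : forall a : unit -> cp_car, cp_sum a = a tt;
  cp_sum_bool : forall a : bool -> cp_car, cp_sum a = cp_add (a true) (a false);
  cp_sum_bij : forall (I J : Type) (f : J -> I) (a : I -> cp_car),
      bijective f -> cp_sum (fun j => a (f j)) = cp_sum a;
  cp_sum_sigma : forall (J : Type) (K : J -> Type) (a : {j : J & K j} -> cp_car),
      cp_sum a = cp_sum (fun j => cp_sum (fun k : K j => a (existT _ j k)));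
  cp_sum_actl : forall (s : S) (I : Type) (v : I -> cp_car),
      cp_act s (cp_sum v) = cp_sum (fun i => cp_act s (v i));
  cp_sum_actr : forall (I : Type) (a : I -> S) (v : cp_car),
      cp_act (cs_sum I a) v = cp_sum (fun i => cp_act (a i) v);
  (* infinite product  prod_{j>=1} s_j ; here indexed from 0 *)
  cp_iprod : (nat -> S) -> cp_car;
  cp_iprod_shift : forall s : nat -> S, cp_iprod s = cp_act (s 0) (cp_iprod (fun j => s j.+1));
  cp_iprod_group : forall (s : nat -> S) (N : nat -> nat),
      N 0 = 0 -> (forall j, N j < N j.+1) ->
      cp_iprod s = cp_iprod (fun j => cs_lprod (map s (iota (N j) (N j.+1 - N j))));
  cp_iprod_sum : forall (I : nat -> Type) (a : forall j, I j -> S),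
      cp_iprod (fun j => cs_sum (I j) (a j))
      = cp_sum (fun f : (forall j, I j) => cp_iprod (fun j => a j (f j)))
}.
Arguments cp_sum {S c} I _.
Arguments cp_act {S c} _ _.
Arguments cp_iprod {S c} _.

Section PushdownDefs.
Variables (S : csemiring) (V : cpair S) (Gamma : finType) (n : nat).

Definition bmx := 'I_n -> 'I_n -> S.

Definition fsumS (T : finType) (F : T -> S) : S :=
  foldr (fun x acc => cs_add (F x) acc) (cs_zero S) (enum T).
Definition fsumV (T : finType) (F : T -> V) : V :=
  foldr (fun x acc => cp_add (F x) acc) (cp_zero V) (enum T).

Definition bmx_zero : bmx := fun _ _ => cs_zero S.
Definition bmx_one : bmx := fun i j => if i == j then cs_one S else cs_zero S.
Definition bmx_mul (A B : bmx) : bmx := fun i j => fsumS (fun k => cs_mul (A i k) (B k j)).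
Definition bmx_lprod (l : seq bmx) : bmx := foldr bmx_mul bmx_one l.

Definition gmx := seq Gamma -> seq Gamma -> bmx.

Definition is_pushdown_transition_matrix (M : gmx) : Prop :=
  (forall p : Gamma, exists L : seq (seq Gamma),
      forall pi, (exists i j, M [:: p] pi i j <> cs_zero S) -> pi \in L) /\
  (forall (p : Gamma) (pi pi' : seq Gamma), M (p :: pi') (pi ++ pi') = M [:: p] pi) /\
  (forall pi1 pi2, ~ (exists (p : Gamma) (pi pi' : seq Gamma), pi1 = p :: pi' /\ pi2 = pi ++ pi') ->
      M pi1 pi2 = bmx_zero).

Fixpoint gmx_pow (M : gmx) (m : nat) : gmx :=
  match m with
  | 0 => fun pi1 pi2 => if pi1 == pi2 then bmx_one else bmx_zero
  | m'.+1 => fun pi1 pi2 i j =>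
      cs_sum (seq Gamma) (fun pi => bmx_mul (gmx_pow M m' pi1 pi) (M pi pi2) i j)
  end.

Definition gmx_star (M : gmx) : gmx :=
  fun pi1 pi2 i j => cs_sum nat (fun m => gmx_pow M m pi1 pi2 i j).

(* (A_M)_{p,p'} : sum over pi = p_1...p_k in Gamma^+ and positions t (0-based,
   t < k) with p_(t+1) = p', of M_{p,pi} (Mstar)_{p_1,eps} ... (Mstar)_{p_t,eps} *)
Definition A_M (M : gmx) (p p' : Gamma) : bmx :=
  fun i j =>
    cs_sum {x : seq Gamma * nat | (x.2 < size x.1) && (nth p' x.1 x.2 == p')}
      (fun x => bmx_mul (M [:: p] (val x).1)
                  (bmx_lprod (map (fun q => gmx_star M [:: q] [::]) (take (val x).2 (val x).1)))
                  i j).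

(* P_l, with states 1..n encoded as ordinals 0..n-1: state j <= l iff ordinal < l *)
Definition P_l (l : nat) (js : nat -> 'I_n) : Prop :=
  forall N : nat, exists t, N <= t /\ (js t < l)%N.

(* ((M^{omega,l})_pi)_i : sum over pi_1, pi_2, ... and (j_1, j_2, ...) in P_l of
   (M_{pi,pi_1})_{i,j_1} (M_{pi_1,pi_2})_{j_1,j_2} ... ;
   pis t = pi_(t+1), js t = j_(t+1). *)
Definition M_omega (M : gmx) (l : nat) (pi : seq Gamma) (i : 'I_n) : V :=
  cp_sum (nat -> seq Gamma) (fun pis =>
    cp_sum {js : nat -> 'I_n | P_l l js} (fun js =>
      let pth := fun t => if t is t'.+1 then pis t' else pi in
      let st := fun t => if t is t'.+1 then proj1_sig js t' else i in
      cp_iprod (fun t => M (pth t) (pth t.+1) (st t) (st t.+1)))).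

End PushdownDefs.

Arguments M_omega {S} V {Gamma n} M l pi i.
Arguments fsumV {S} V {T} F.

(* Main.v *)
Require Import Defs.
From mathcomp Require Import all_boot.
From mathcomp Require Import zify.
From Stdlib Require Import Lia ClassicalEpsilon FunctionalExtensionality ProofIrrelevance Classical.
Set Implicit Arguments. Unset Strict Implicit. Unset Printing Implicit Defensive.

Record cmon := CMon {
  cm_car :> Type;
  cm_add : cm_car -> cm_car -> cm_car;
  cm_zero : cm_car;
  cm_sum : forall I : Type, (I -> cm_car) -> cm_car;
  cm_addC : commutative cm_add;
  cm_add0l : left_id cm_zero cm_add;
  cm_sum_empty : forall (I : Type) (a : I -> cm_car), (I -> False) -> cm_sum a = cm_zero;
  cm_sum_unit : forall a : unit -> cm_car, cm_sum a = a tt;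
  cm_sum_bool : forall a : bool -> cm_car, cm_sum a = cm_add (a true) (a false);
  cm_sum_bij : forall (I J : Type) (f : J -> I) (a : I -> cm_car),
      bijective f -> cm_sum (fun j => a (f j)) = cm_sum a;
  cm_sum_sigma : forall (J : Type) (K : J -> Type) (a : {j : J & K j} -> cm_car),
      cm_sum a = cm_sum (fun j => cm_sum (fun k : K j => a (existT _ j k)));
  cm_sum_zero : forall I : Type, cm_sum (fun _ : I => cm_zero) = cm_zero
}.
Arguments cm_sum {c I} _.
Arguments cm_zero {c}.
Arguments cm_add {c}.

Section Gen.
Variable C : cmon.

Lemma add0r_ (x : C) : cm_add x cm_zero = x.
Proof. by rewrite cm_addC cm_add0l. Qed.

Lemma sum_congr I (f g : I -> C) : (forall i, f i = g i) -> cm_sum f = cm_sum g.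
Proof. by move=> h; rewrite (functional_extensionality _ _ h). Qed.

Lemma sum_zero_if I (f : I -> C) : (forall i, f i = cm_zero) -> cm_sum f = cm_zero.
Proof. by move=> h; rewrite (sum_congr h) cm_sum_zero. Qed.

Lemma sum_sigmaE J (K : J -> Type) (F : forall j, K j -> C) :
  cm_sum (fun j => cm_sum (F j)) = cm_sum (fun z : {j & K j} => F (projT1 z) (projT2 z)).
Proof. symmetry; exact: (cm_sum_sigma (fun z : {j & K j} => F (projT1 z) (projT2 z))). Qed.

Lemma sum_sum A B (f : A + B -> C) :
  cm_sum f = cm_add (cm_sum (fun a => f (inl a))) (cm_sum (fun b => f (inr b))).
Proof.
pose g := fun z : {b : bool & if b then A else B} =>
  (if projT1 z as b return (if b then A else B) -> A + B then fun x => inl x else fun x => inr x) (projT2 z).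
pose h := fun s : A + B => match s with inl a => existT (fun b : bool => if b then A else B) true a
                                     | inr b => existT (fun b : bool => if b then A else B) false b end.
have bij : bijective g.
  exists h; first by case=> [[]] x.
  by case.
rewrite -(cm_sum_bij f bij) cm_sum_sigma cm_sum_bool //.
Qed.

Lemma sum_split I (P : I -> Prop) (f : I -> C) :
  cm_sum f = cm_add (cm_sum (fun x : {i | P i} => f (proj1_sig x)))
                    (cm_sum (fun x : {i | ~ P i} => f (proj1_sig x))).
Proof.
pose g := fun s : {i | P i} + {i | ~ P i} => match s with inl x => proj1_sig x | inr x => proj1_sig x end.
pose h := fun i => match excluded_middle_informative (P i) with
                   | left p => @inl {i | P i} {i | ~ P i} (exist _ i p)
                   | right np => inr (exist _ i np) end.
have bij : bijective g.
  exists h.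
    case=> [[x px]|[x px]]; rewrite /h /=; case: (excluded_middle_informative _) => q //.
    - by rewrite (proof_irrelevance _ q px).
    - by rewrite (proof_irrelevance _ q px).
  by move=> i; rewrite /h; case: (excluded_middle_informative _).
by rewrite -(cm_sum_bij f bij) sum_sum.
Qed.

Lemma sum_master I J (f : I -> C) (g : J -> C) (Q : J -> Prop) (phi : J -> I) :
  (forall j1 j2, Q j1 -> Q j2 -> phi j1 = phi j2 -> j1 = j2) ->
  (forall j, ~ Q j -> g j = cm_zero) ->
  (forall i, (forall j, Q j -> phi j <> i) -> f i = cm_zero) ->
  (forall j, Q j -> f (phi j) = g j) ->
  cm_sum f = cm_sum g.
Proof.
move=> inj g0 f0 fg.
rewrite (sum_split Q g) (sum_zero_if (f := fun x : {j | ~ Q j} => g (proj1_sig x))); last first.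
  by case=> j /= /g0.
rewrite add0r_.
rewrite (sum_split (fun i => exists j, Q j /\ phi j = i) f).
rewrite (sum_zero_if (f := fun x : {i | ~ _} => f (proj1_sig x))); last first.
  case=> i /= ni; apply: f0 => j qj e; apply: ni; by exists j.
rewrite add0r_.
pose psi := fun j : {j | Q j} => exist (fun i => exists j, Q j /\ phi j = i) (phi (proj1_sig j))
   (ex_intro _ (proj1_sig j) (conj (proj2_sig j) erefl)).
pose psinv := fun i : {i | exists j, Q j /\ phi j = i} =>
   let c := constructive_indefinite_description _ (proj2_sig i) in
   exist Q (proj1_sig c) (proj1 (proj2_sig c)).
have bij : bijective psi.
  exists psinv.
    case=> j qj; rewrite /psinv /psi /=.
    case: constructive_indefinite_description => x [qx ex] /=.
    have ej : x = j by apply: inj.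
    subst x; congr exist; exact: proof_irrelevance.
  case=> i hi; rewrite /psinv /psi /=.
  case: constructive_indefinite_description => x [qx ex] /=.
  subst i; congr exist; exact: proof_irrelevance.
rewrite -(cm_sum_bij (fun x : {i | exists j, Q j /\ phi j = i} => f (proj1_sig x)) bij).
apply: sum_congr => -[j qj] /=; exact: fg.
Qed.

Lemma sum_unique I (f : I -> C) i0 : (forall i, i <> i0 -> f i = cm_zero) -> cm_sum f = f i0.
Proof.
move=> h; rewrite -(cm_sum_unit (fun _ => f i0)).
apply: (sum_master (Q := fun _ => True) (phi := fun _ => i0)) => //.
- by move=> [] [].
- by move=> i hi; apply: h => e; apply: (hi tt).
Qed.

Lemma sum_exchange I J (F : I -> J -> C) :
  cm_sum (fun i => cm_sum (fun j => F i j)) = cm_sum (fun j => cm_sum (fun i => F i j)).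
Proof.
rewrite (sum_sigmaE (fun i j => F i j)) (sum_sigmaE (fun j i => F i j)) /=.
pose sw := fun z : {j : J & I} => existT (fun _ : I => J) (projT2 z) (projT1 z).
have bij : bijective sw.
  by exists (fun z : {i : I & J} => existT (fun _ : J => I) (projT2 z) (projT1 z)); case.
by rewrite -(cm_sum_bij _ bij).
Qed.

Lemma sum_empty0 I (f : I -> C) : (I -> False) -> cm_sum f = cm_zero.
Proof. exact: cm_sum_empty. Qed.

Lemma fsum_seq (T : eqType) (s : seq T) (F : T -> C) : uniq s ->
  foldr (fun x acc => cm_add (F x) acc) cm_zero s = cm_sum (fun x : {x | x \in s} => F (proj1_sig x)).
Proof.
elim: s => [|a s IH] /=.
  by move=> _; rewrite cm_sum_empty // => -[].
move=> /andP [nas us]; rewrite IH //.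
pose g := fun z : unit + {x | x \in s} =>
  match z with inl _ => exist (fun x => x \in a :: s) a (mem_head a s)
  | inr y => exist (fun x => x \in a :: s) (proj1_sig y)
              (introT orP (or_intror (proj2_sig y))) end.
pose h := fun y : {x | x \in a :: s} =>
  (if proj1_sig y \in s as b return (proj1_sig y \in s = b -> unit + {x | x \in s})
   then fun p => inr (exist (fun x => x \in s) (proj1_sig y) p)
   else fun _ => inl tt) erefl.
have bij : bijective g.
  exists h.
    case=> [[]|[y ys]]; rewrite /h /=.
      move: erefl; rewrite {2 3}(negbTE nas) //.
    move: erefl; rewrite {2 3}ys => p.
    congr inr; congr exist; exact: bool_irrelevance.
  case=> y ys; rewrite /h /=.
  move: erefl; case: {2 3}(y \in s) => p.
    congr exist; exact: bool_irrelevance.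
  have /eqP e : y == a by move: (ys); rewrite in_cons p orbF.
  subst y; rewrite /g; congr exist; exact: bool_irrelevance.
rewrite -(cm_sum_bij (fun x : {x | x \in a :: s} => F (proj1_sig x)) bij) sum_sum cm_sum_unit /=.
done.
Qed.

Lemma fsum_sum (T : finType) (F : T -> C) :
  foldr (fun x acc => cm_add (F x) acc) cm_zero (enum T) = cm_sum F.
Proof.
rewrite fsum_seq ?enum_uniq //.
pose g := fun x : {x | x \in enum T} => proj1_sig x.
have bij : bijective g.
  exists (fun x => exist (fun x => x \in enum T) x (mem_enum T x)) => //.
  by case=> x p; rewrite /g /=; congr exist; exact: bool_irrelevance.
exact: (cm_sum_bij F bij).
Qed.

End Gen.

Section CM.
Variables (S : csemiring) (V : cpair S).

Lemma cs_sum_zero I : cs_sum I (fun _ => cs_zero S) = cs_zero S.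
Proof.
have bij : bijective (fun i : I => (i, tt)) by exists fst => // -[x []].
transitivity (cs_sum (I * unit) (fun x : I * unit => cs_mul ((fun _ : I => cs_one S) x.1) ((fun _ : unit => cs_zero S) x.2))).
  rewrite -(cs_sum_bij (fun x : I * unit => cs_mul (cs_one S) (cs_zero S)) bij) /=.
  by rewrite cs_mul0r.
have h := cs_sum_mul (fun _ : I => cs_one S) (fun _ : unit => cs_zero S).
rewrite cs_sum_unit cs_mul0r in h; exact: (esym h).
Qed.

Lemma cp_sum_zero I : cp_sum I (fun _ => cp_zero V) = cp_zero V.
Proof.
have h := cp_sum_actl (cs_zero S) (fun _ : I => cp_zero V).
rewrite cp_act0l in h; rewrite {2}h.
congr (cp_sum _); apply: functional_extensionality => i; by rewrite cp_act0l.
Qed.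

Definition cmS : cmon := @CMon S (@cs_add S) (cs_zero S) (@cs_sum S) (@cs_addC S) (@cs_add0l S)
  (@cs_sum_empty S) (@cs_sum_unit S) (@cs_sum_bool S) (@cs_sum_bij S) (@cs_sum_sigma S) cs_sum_zero.
Definition cmV : cmon := @CMon V (@cp_add S V) (cp_zero V) (@cp_sum S V) (@cp_addC S V) (@cp_add0l S V)
  (@cp_sum_empty S V) (@cp_sum_unit S V) (@cp_sum_bool S V) (@cp_sum_bij S V) (@cp_sum_sigma S V) cp_sum_zero.

Lemma mul_suml I (a : I -> S) s : cs_mul (cs_sum I a) s = cs_sum I (fun i => cs_mul (a i) s).
Proof.
have := cs_sum_mul a (fun _ : unit => s); rewrite cs_sum_unit => ->.
have bij : bijective (fun i : I => (i, tt)) by exists fst => // -[x []].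
by rewrite -(cs_sum_bij (fun x : I * unit => cs_mul (a x.1) s) bij).
Qed.

Lemma mul_sumr I (a : I -> S) s : cs_mul s (cs_sum I a) = cs_sum I (fun i => cs_mul s (a i)).
Proof.
have := cs_sum_mul (fun _ : unit => s) a; rewrite cs_sum_unit => ->.
have bij : bijective (fun i : I => (tt, i)) by exists snd => // -[[] x].
by rewrite -(cs_sum_bij (fun x : unit * I => cs_mul s (a x.2)) bij).
Qed.

Lemma lprod_cat (l1 l2 : seq S) : cs_lprod (l1 ++ l2) = cs_mul (cs_lprod l1) (cs_lprod l2).
Proof. elim: l1 => [|a l IH] /=; first by rewrite cs_mul1l. by rewrite IH cs_mulA. Qed.

Lemma mkseqS' (T : Type) (f : nat -> T) m : mkseq f m.+1 = f 0 :: mkseq (fun t => f t.+1) m.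
Proof.
rewrite /mkseq /= -[1]/(1 + 0) iotaDl -map_comp; congr cons; apply: eq_map => t /=.
Qed.

Lemma iprod_prefix m (s : nat -> S) :
  cp_iprod s = cp_act (cs_lprod (mkseq s m)) (cp_iprod (fun t => s (m + t)) : V).
Proof.
elim: m s => [|m IH] s.
  rewrite /= cp_act1; congr cp_iprod; apply: functional_extensionality => t; by rewrite add0n.
rewrite cp_iprod_shift (IH (fun t => s t.+1)) -cp_actA mkseqS' /=.
congr (cp_act _ (cp_iprod _)); apply: functional_extensionality => t; by rewrite addSn.
Qed.

Lemma iprod_zero (s : nat -> S) t : s t = cs_zero S -> cp_iprod s = cp_zero V.
Proof.
move=> h; rewrite (iprod_prefix t s) cp_iprod_shift addn0 h cp_act0l.
exact: cp_act0r.
Qed.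

End CM.

Section PD.
Variables (S : csemiring) (V : cpair S) (Gamma : finType) (n : nat) (M : gmx S Gamma n).
Hypothesis HM : is_pushdown_transition_matrix M.
Variable l : nat.

Lemma sumV_congr I (f g : I -> V) : (forall i, f i = g i) -> cp_sum I f = cp_sum I g.
Proof. exact: (sum_congr (C := cmV V)). Qed.
Lemma sumS_congr I (f g : I -> S) : (forall i, f i = g i) -> cs_sum I f = cs_sum I g.
Proof. exact: (sum_congr (C := cmS S)). Qed.
Lemma sumV_zero_if I (f : I -> V) : (forall i, f i = cp_zero V) -> cp_sum I f = cp_zero V.
Proof. exact: (sum_zero_if (C := cmV V)). Qed.
Lemma sumV_master I J (f : I -> V) (g : J -> V) (Q : J -> Prop) (phi : J -> I) :
  (forall j1 j2, Q j1 -> Q j2 -> phi j1 = phi j2 -> j1 = j2) ->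
  (forall j, ~ Q j -> g j = cp_zero V) ->
  (forall i, (forall j, Q j -> phi j <> i) -> f i = cp_zero V) ->
  (forall j, Q j -> f (phi j) = g j) ->
  cp_sum I f = cp_sum J g.
Proof. exact: (sum_master (C := cmV V)). Qed.
Lemma sumS_master I J (f : I -> S) (g : J -> S) (Q : J -> Prop) (phi : J -> I) :
  (forall j1 j2, Q j1 -> Q j2 -> phi j1 = phi j2 -> j1 = j2) ->
  (forall j, ~ Q j -> g j = cs_zero S) ->
  (forall i, (forall j, Q j -> phi j <> i) -> f i = cs_zero S) ->
  (forall j, Q j -> f (phi j) = g j) ->
  cs_sum I f = cs_sum J g.
Proof. exact: (sum_master (C := cmS S)). Qed.
Lemma sumV_unique I (f : I -> V) i0 : (forall i, i <> i0 -> f i = cp_zero V) -> cp_sum I f = f i0.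
Proof. exact: (sum_unique (C := cmV V)). Qed.
Lemma sumS_unique I (f : I -> S) i0 : (forall i, i <> i0 -> f i = cs_zero S) -> cs_sum I f = f i0.
Proof. exact: (sum_unique (C := cmS S)). Qed.
Lemma sumV_exchange I J (F : I -> J -> V) :
  cp_sum I (fun i => cp_sum J (fun j => F i j)) = cp_sum J (fun j => cp_sum I (fun i => F i j)).
Proof. exact: (sum_exchange (C := cmV V)). Qed.
Lemma sumV_sum A B (f : A + B -> V) :
  cp_sum _ f = cp_add (cp_sum _ (fun a => f (inl a))) (cp_sum _ (fun b => f (inr b))).
Proof. exact: (sum_sum (C := cmV V)). Qed.
Lemma sumV_sigmaE J (K : J -> Type) (F : forall j, K j -> V) :
  cp_sum J (fun j => cp_sum (K j) (F j)) = cp_sum {j & K j} (fun z => F (projT1 z) (projT2 z)).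
Proof. exact: (sum_sigmaE (C := cmV V)). Qed.
Lemma fsumV_sum (T : finType) (F : T -> V) : fsumV V F = cp_sum T F.
Proof. exact: (fsum_sum (C := cmV V)). Qed.
Lemma fsumS_sum (T : finType) (F : T -> S) : fsumS F = cs_sum T F.
Proof. exact: (fsum_sum (C := cmS S)). Qed.
Lemma bmx_mulE (A B : bmx S n) i j : bmx_mul A B i j = cs_sum 'I_n (fun k => cs_mul (A i k) (B k j)).
Proof. exact: fsumS_sum. Qed.

Definition pthf (T : Type) (a : T) (f : nat -> T) (t : nat) : T := if t is t'.+1 then f t' else a.

Definition wt (pi : seq Gamma) (i : 'I_n) (pis : nat -> seq Gamma) (js : nat -> 'I_n) : V :=
  cp_iprod (fun t => M (pthf pi pis t) (pthf pi pis t.+1) (pthf i js t) (pthf i js t.+1)).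

Definition Idx := {pis : nat -> seq Gamma & {js : nat -> 'I_n | P_l l js}}.
Definition W pi i : V := cp_sum Idx (fun z => wt pi i (projT1 z) (proj1_sig (projT2 z))).

Lemma WE pi i : M_omega V M l pi i = W pi i.
Proof. exact: (sum_sigmaE (C := cmV V) (fun pis (js : {js | P_l l js}) => wt pi i pis (proj1_sig js))). Qed.

Definition mkIdx pis js (h : P_l l js) : Idx := existT _ pis (exist _ js h).

Lemma mkIdx_eq pis1 pis2 js1 js2 h1 h2 : pis1 = pis2 -> js1 = js2 -> @mkIdx pis1 js1 h1 = @mkIdx pis2 js2 h2.
Proof. move=> e1 e2; subst; by rewrite (proof_irrelevance _ h1 h2). Qed.

Lemma Idx_eta (z : Idx) : z = @mkIdx (projT1 z) (proj1_sig (projT2 z)) (proj2_sig (projT2 z)).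
Proof. by case: z => pis [js h]. Qed.

Lemma catIs' (T : eqType) (a b s : seq T) : a ++ s = b ++ s -> a = b.
Proof.
move=> e; have hs : size a = size b.
  by move/(congr1 size): e; rewrite !size_cat => /eqP; rewrite eqn_add2r => /eqP.
by rewrite -(take_size_cat s (erefl (size a))) e take_size_cat.
Qed.

Lemma M_nil b : M [::] b = @bmx_zero S n.
Proof. case: HM => _ [_ H3]; apply: H3 => -[p [pi [pi' [e _]]]] //. Qed.

Lemma M_app a b s : a != [::] -> M (a ++ s) (b ++ s) = M a b.
Proof.
case: HM => _ [H2 H3]; case: a => // c a' _.
case: (classic (exists rho, b = rho ++ a')) => [[rho ->]|nb].
  by rewrite -catA /= !H2.
rewrite !H3 //.
  move=> [p [rho [pi' [[_ e] e2]]]]; subst; apply: nb; by exists rho.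
move=> [p [rho [pi' [[_ e] e2]]]]; subst; apply: nb; exists rho.
by apply: (@catIs' _ _ _ s); rewrite -catA.
Qed.

Lemma P_l_cons (k : 'I_n) js : P_l l js -> P_l l (pthf k js).
Proof. move=> h N; case: (h N) => t [ht1 ht2]; exists t.+1; split => //; exact: leqW. Qed.

Lemma P_l_tail (js : nat -> 'I_n) : P_l l js -> P_l l (fun t => js t.+1).
Proof. move=> h N; case: (h N.+1) => [[|t]] [ht1 ht2] //; by exists t. Qed.

Lemma W_nil k : W [::] k = cp_zero V.
Proof.
apply: sumV_zero_if => z; apply: (@iprod_zero _ V _ 0) => /=.
by rewrite M_nil.
Qed.

Lemma step1 a i : W a i = cp_sum (seq Gamma) (fun b => cp_sum 'I_n (fun k => cp_act (M a b i k) (W b k))).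
Proof.
pose T3 := {b : seq Gamma & {k : 'I_n & Idx}}.
pose H := fun w : T3 => cp_act (M a (projT1 w) i (projT1 (projT2 w)))
   (wt (projT1 w) (projT1 (projT2 w)) (projT1 (projT2 (projT2 w))) (proj1_sig (projT2 (projT2 (projT2 w))))).
transitivity (cp_sum T3 H); last first.
  rewrite [LHS]cp_sum_sigma; apply: sumV_congr => b.
  rewrite [LHS]cp_sum_sigma; apply: sumV_congr => k /=.
  by rewrite cp_sum_actl.
pose f := fun w : T3 => @mkIdx (pthf (projT1 w) (projT1 (projT2 (projT2 w))))
   (pthf (projT1 (projT2 w)) (proj1_sig (projT2 (projT2 (projT2 w)))))
   (P_l_cons (projT1 (projT2 w)) (proj2_sig (projT2 (projT2 (projT2 w))))).
pose g := fun z : Idx => existT (fun _ : seq Gamma => {k : 'I_n & Idx}) (projT1 z 0)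
   (existT (fun _ : 'I_n => Idx) (proj1_sig (projT2 z) 0)
     (@mkIdx (fun t => projT1 z t.+1) (fun t => proj1_sig (projT2 z) t.+1) (P_l_tail (proj2_sig (projT2 z))))).
have bij : bijective f.
  exists g.
    case=> b [k [pis [js h]]]; rewrite /f /g /=.
    congr existT; congr existT; exact: mkIdx_eq.
  case=> pis [js h]; rewrite /f /g /=; apply: mkIdx_eq;
    apply: functional_extensionality; by case.
rewrite /W -(cp_sum_bij _ bij); apply: sumV_congr => w.
by rewrite /f /H /wt cp_iprod_shift.
Qed.


Lemma sumS_zero_if I (f : I -> S) : (forall i, f i = cs_zero S) -> cs_sum I f = cs_zero S.
Proof. exact: (sum_zero_if (C := cmS S)). Qed.

Fixpoint pathw (x : seq Gamma * 'I_n) (w : seq (seq Gamma * 'I_n)) : S :=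
  if w is y :: w' then cs_mul (M x.1 y.1 x.2 y.2) (pathw y w') else cs_one S.

Lemma pathw_rcons x w z : pathw x (rcons w z) = cs_mul (pathw x w) (M (last x w).1 z.1 (last x w).2 z.2).
Proof.
elim: w x => [|y w IH] x /=; first by rewrite cs_mul1r cs_mul1l.
by rewrite IH cs_mulA.
Qed.

Lemma lprod_path (P : nat -> seq Gamma) (Q : nat -> 'I_n) m :
  cs_lprod (mkseq (fun t => M (P t) (P t.+1) (Q t) (Q t.+1)) m)
  = pathw (P 0, Q 0) (mkseq (fun t => (P t.+1, Q t.+1)) m).
Proof.
elim: m P Q => [|m IH] P Q //.
by rewrite !mkseqS' /= (IH (fun t => P t.+1) (fun t => Q t.+1)).
Qed.

Lemma pathw_app s x w : all (fun e => e.1 != [::]) (belast x w) ->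
  pathw (x.1 ++ s, x.2) (map (fun e => (e.1 ++ s, e.2)) w) = pathw x w.
Proof.
elim: w x => [|y w IH] x //= /andP [hx hw].
by rewrite M_app // IH.
Qed.

Lemma pathw_zero x w : ~~ all (fun e => e.1 != [::]) (belast x w) -> pathw x w = cs_zero S.
Proof.
elim: w x => [|y w IH] x //=.
rewrite negb_and => /orP [h|h].
  move: h; rewrite negbK => /eqP h; rewrite h M_nil /bmx_zero; exact: cs_mul0l.
by rewrite IH // cs_mul0r.
Qed.

Lemma gmx_powE m a b i j : gmx_pow M m.+1 a b i j
  = cs_sum {w : seq (seq Gamma * 'I_n) | size w == m} (fun w => pathw (a, i) (rcons (proj1_sig w) (b, j))).
Proof.
elim: m b j => [|m IH] b j.
  rewrite /= (sumS_unique (i0 := a)); last first.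
    move=> pi npi; have -> : (a == pi) = false by apply/eqP => e; apply: npi.
    rewrite bmx_mulE; apply: sumS_zero_if => k; exact: cs_mul0l.
  rewrite (sumS_unique (i0 := exist (fun w : seq (seq Gamma * 'I_n) => size w == 0) [::] erefl)); last first.
    case=> w hw nw; exfalso; apply: nw; move: hw; case: w => // hw.
    congr exist; exact: bool_irrelevance.
  rewrite /= eqxx bmx_mulE (sumS_unique (i0 := i)); last first.
    move=> k nk; rewrite /bmx_one; have -> : (i == k) = false by apply/eqP => e; apply: nk.
    exact: cs_mul0l.
  by rewrite /bmx_one eqxx cs_mul1l cs_mul1r.
pose T3 := {p0 : seq Gamma & {k : 'I_n & {w : seq (seq Gamma * 'I_n) | size w == m}}}.
pose g := fun z : T3 => pathw (a, i) (rcons (rcons (proj1_sig (projT2 (projT2 z))) (projT1 z, projT1 (projT2 z))) (b, j)).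
transitivity (cs_sum T3 g).
  change (cs_sum (seq Gamma) (fun pi => bmx_mul (gmx_pow M m.+1 a pi) (M pi b) i j) = cs_sum T3 g).
  rewrite [in RHS]cs_sum_sigma; apply: sumS_congr => pi.
  rewrite bmx_mulE [in RHS]cs_sum_sigma; apply: sumS_congr => k.
  rewrite IH mul_suml; apply: sumS_congr => -[w hw] /=.
  by rewrite /g /= [in RHS]pathw_rcons last_rcons.
symmetry.
have hs : forall z : T3, size (rcons (proj1_sig (projT2 (projT2 z))) (projT1 z, projT1 (projT2 z))) == m.+1.
  by case=> pi [k [w hw]] /=; rewrite size_rcons.
apply: (sumS_master (Q := fun _ => True)
  (phi := fun z : T3 => exist (fun w : seq (seq Gamma * 'I_n) => size w == m.+1) _ (hs z))) => //.
- case=> pi [k [w hw]] [pi' [k' [w' hw']]] _ _ e.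
  have /= /rcons_inj [e1 e2 e3] := congr1 (@proj1_sig _ _) e.
  subst; congr existT; congr existT; congr exist; exact: bool_irrelevance.
- case=> w; case/lastP: w => [|w [pi k]] // hw H; exfalso.
  have hw' : size w == m by move: (hw); rewrite size_rcons.
  apply: (H (existT _ pi (existT _ k (exist _ w hw')))) => //=.
  congr exist; exact: bool_irrelevance.
Qed.

Lemma sumV_seq_size (T : Type) (F : seq T -> V) :
  cp_sum nat (fun m => cp_sum {w : seq T | size w == m} (fun w => F (proj1_sig w))) = cp_sum (seq T) F.
Proof.
rewrite (sumV_sigmaE (fun m (w : {w : seq T | size w == m}) => F (proj1_sig w))) /=.
apply: (sumV_master (Q := fun _ => True)
  (phi := fun w : seq T => existT (fun m => {w : seq T | size w == m}) (size w) (exist _ w (eqxx _)))) => //.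
- move=> w1 w2 _ _ e; exact: (congr1 (fun z : {m : nat & {w : seq T | size w == m}} => proj1_sig (projT2 z)) e).
- case=> m [w hw] H; exfalso; move/eqP: (hw) => e; subst m.
  apply: (H w) => //; congr existT; congr exist; exact: bool_irrelevance.
Qed.

Definition JA := {k1 : 'I_n & {w : seq (seq Gamma * 'I_n) & Idx}}.

Definition gA q k0 (z : JA) : V :=
  cp_act (pathw ([:: q], k0) (rcons (projT1 (projT2 z)) ([::], projT1 z)))
    (wt [::] (projT1 z) (projT1 (projT2 (projT2 z))) (proj1_sig (projT2 (projT2 (projT2 z))))).

Definition gA' q pi' k0 (z : JA) : V :=
  cp_act (pathw ([:: q], k0) (rcons (projT1 (projT2 z)) ([::], projT1 z)))
    (wt pi' (projT1 z) (projT1 (projT2 (projT2 z))) (proj1_sig (projT2 (projT2 (projT2 z))))).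

Lemma starA q pi' k0 : cp_sum 'I_n (fun k1 => cp_act (gmx_star M [:: q] [::] k0 k1) (W pi' k1))
  = cp_sum JA (gA' q pi' k0).
Proof.
rewrite [RHS]cp_sum_sigma; apply: sumV_congr => k1.
rewrite [RHS]cp_sum_sigma /gmx_star cp_sum_actr.
transitivity (cp_sum nat (fun m => cp_act (gmx_pow M m.+1 [:: q] [::] k0 k1) (W pi' k1))).
  apply: (sumV_master (Q := fun _ => True) (phi := succn)) => //.
  - by move=> m1 m2 _ _ [].
  - case=> [|m] H; last by exfalso; exact: (H m).
    rewrite /= /bmx_zero; exact: cp_act0l.
rewrite -(sumV_seq_size (fun w => cp_sum Idx (fun k : Idx => gA' q pi' k0
      (existT (fun=> {w : seq (seq Gamma * 'I_n) & Idx}) k1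
         (existT (fun=> Idx) w k))))).
apply: sumV_congr => m; rewrite gmx_powE cp_sum_actr; apply: sumV_congr => -[w hw] /=.
rewrite /W cp_sum_actl; apply: sumV_congr => z //.
Qed.

Definition prep (X : Type) (L : seq X) (h : nat -> X) (t : nat) : X := nth (h (t - size L)) L t.

Lemma prep_lt (X : Type) (L : seq X) h t x0 : t < size L -> prep L h t = nth x0 L t.
Proof. move=> ht; exact: set_nth_default. Qed.

Lemma prep_ge (X : Type) (L : seq X) h u : prep L h (size L + u) = h u.
Proof. by rewrite /prep nth_default ?leq_addr // addKn. Qed.

Lemma prep_ge' (X : Type) (L : seq X) h m u : size L = m -> prep L h (m + u) = h u.
Proof. move=> <-; exact: prep_ge. Qed.

Definition Lw pi' (w : seq (seq Gamma * 'I_n)) (k1 : 'I_n) :=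
  rcons (map (fun e => (e.1 ++ pi', e.2)) w) (pi', k1).

Definition hf (pis : nat -> seq Gamma) (js : nat -> 'I_n) := fun u => (pis u, js u).

Lemma size_Lw pi' w k1 : size (Lw pi' w k1) = (size w).+1.
Proof. by rewrite size_rcons size_map. Qed.

Lemma prep_tail pi' w k1 (h : nat -> seq Gamma * 'I_n) u :
  prep (Lw pi' w k1) h (size w + u) = pthf (pi', k1) h u.
Proof.
case: u => [|u].
  rewrite addn0 (prep_lt _ (pi', k1)); last by rewrite size_Lw.
  by rewrite nth_rcons size_map ltnn eqxx.
by rewrite addnS -addSn -(size_Lw pi' w k1) prep_ge.
Qed.

Lemma prep_head pi' w k1 (h : nat -> seq Gamma * 'I_n) t : t < size w ->
  prep (Lw pi' w k1) h t = ((nth ([::], k1) w t).1 ++ pi', (nth ([::], k1) w t).2).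
Proof.
move=> ht; rewrite (prep_lt _ (pi', k1)); last by rewrite size_Lw ltnW.
by rewrite nth_rcons size_map ht (nth_map ([::], k1)).
Qed.

Lemma P_l_prep (L : seq (seq Gamma * 'I_n)) pis js : P_l l js -> P_l l (fun t => (prep L (hf pis js) t).2).
Proof.
move=> h N; case: (h N) => t [ht1 ht2]; exists (size L + t); split.
  exact: (leq_trans ht1 (leq_addl _ _)).
by rewrite prep_ge.
Qed.

Definition phiA pi' (z : JA) : Idx :=
  @mkIdx (fun t => (prep (Lw pi' (projT1 (projT2 z)) (projT1 z))
                         (hf (projT1 (projT2 (projT2 z))) (proj1_sig (projT2 (projT2 (projT2 z))))) t).1)
         (fun t => (prep (Lw pi' (projT1 (projT2 z)) (projT1 z))
                         (hf (projT1 (projT2 (projT2 z))) (proj1_sig (projT2 (projT2 (projT2 z))))) t).2)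
         (P_l_prep _ _ (proj2_sig (projT2 (projT2 (projT2 z))))).

Definition phiB pi' (z : Idx) : Idx :=
  @mkIdx (fun t => projT1 z t ++ pi') (proj1_sig (projT2 z)) (proj2_sig (projT2 z)).

Lemma wtA q pi' k0 k1 w pis js : all (fun e => e.1 != [::]) w ->
  wt (q :: pi') k0 (fun t => (prep (Lw pi' w k1) (hf pis js) t).1) (fun t => (prep (Lw pi' w k1) (hf pis js) t).2)
  = cp_act (pathw ([:: q], k0) (rcons w ([::], k1))) (wt pi' k1 pis js).
Proof.
move=> hw.
set L := Lw pi' w k1.
set P := fun t => (prep L (hf pis js) t).1.
set Qf := fun t => (prep L (hf pis js) t).2.
rewrite /wt (iprod_prefix V (size L)) (lprod_path (pthf (q :: pi') P) (pthf k0 Qf)) /=.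
have eL : mkseq (fun t => (P t, Qf t)) (size L) = L.
  apply: (@eq_from_nth _ (pi', k1)); first by rewrite size_mkseq.
  move=> t; rewrite size_mkseq => ht; rewrite nth_mkseq // /P /Qf (prep_lt _ (pi', k1) ht).
  by case: (nth _ L t).
rewrite eL.
have -> : pathw (q :: pi', k0) L = pathw ([:: q], k0) (rcons w ([::], k1)).
  have := @pathw_app pi' ([:: q], k0) (rcons w ([::], k1)).
  by rewrite belast_rcons /= map_rcons /= => ->.
congr (cp_act _ (cp_iprod _)); apply: functional_extensionality => u.
have e1 : forall u, pthf (q :: pi') P (size L + u) = pthf pi' pis u.
  move=> v; rewrite size_Lw addSn /= /P prep_tail; by case: v.
have e2 : forall u, pthf k0 Qf (size L + u) = pthf k1 js u.
  move=> v; rewrite size_Lw addSn /= /Qf prep_tail; by case: v.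
by rewrite e1 e2 /P /Qf !prep_ge.
Qed.

Lemma wtB q pi' k0 pis js : (forall t, pis t != [::]) ->
  wt (q :: pi') k0 (fun t => pis t ++ pi') js = wt [:: q] k0 pis js.
Proof.
move=> hp; rewrite /wt; congr cp_iprod; apply: functional_extensionality => t.
have e : forall t, pthf (q :: pi') (fun t => pis t ++ pi') t = pthf [:: q] pis t ++ pi' by case.
rewrite !e M_app //; by case: t.
Qed.

Lemma wt_zero a k pis js t : pis t = [::] -> wt a k pis js = cp_zero V.
Proof. move=> h; apply: (@iprod_zero _ V _ t.+1) => /=; by rewrite h M_nil. Qed.

Lemma least_ex (P : nat -> Prop) : (exists t, P t) -> exists t, P t /\ forall t', t' < t -> ~ P t'.
Proof.
move=> [t Pt]; elim/ltn_ind: t Pt => t IH Pt.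
case: (classic (exists t', t' < t /\ P t')) => [[t' [lt Pt']]|no]; first exact: IH t' lt Pt'.
exists t; split=> // t' lt P'; apply: no; by exists t'.
Qed.

Definition good pi' (x : seq Gamma) := exists a, a != [::] /\ x = a ++ pi'.
Definition strip pi' x : seq Gamma :=
  match excluded_middle_informative (good pi' x) with
  | left g => proj1_sig (constructive_indefinite_description _ g) | right _ => [::] end.
Lemma stripP pi' x : good pi' x -> strip pi' x != [::] /\ x = strip pi' x ++ pi'.
Proof.
rewrite /strip; case: excluded_middle_informative => // g _.
by case: constructive_indefinite_description.
Qed.

Lemma cat_neq (a s : seq Gamma) : a != [::] -> a ++ s <> s.
Proof. move=> ha e; move/(congr1 size): e; rewrite size_cat; case: a ha => //= x a _ e; lia. Qed.

Lemma P_l_shift m (js : nat -> 'I_n) : P_l l js -> P_l l (fun u => js (m + u)).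
Proof.
move=> h N; case: (h (N + m)) => t [ht1 ht2]; exists (t - m); split; first lia.
have -> : m + (t - m) = t by lia.
done.
Qed.

Lemma keyA pi' w k1 (h : nat -> seq Gamma * 'I_n) t : all (fun e : seq Gamma * 'I_n => e.1 != [::]) w ->
  t < size w -> (prep (Lw pi' w k1) h t).1 <> pi'.
Proof.
move=> hw ht; rewrite prep_head //=; apply: cat_neq.
by move/all_nthP: hw => /(_ ([::], k1) t ht).
Qed.

Lemma keyB pi' w k1 (h : nat -> seq Gamma * 'I_n) : prep (Lw pi' w k1) h (size w) = (pi', k1).
Proof. by rewrite -[size w]addn0 prep_tail. Qed.

Lemma injA pi' k1 k1' w w' (h h' : nat -> seq Gamma * 'I_n) :
  all (fun e : seq Gamma * 'I_n => e.1 != [::]) w -> all (fun e : seq Gamma * 'I_n => e.1 != [::]) w' ->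
  (forall t, prep (Lw pi' w k1) h t = prep (Lw pi' w' k1') h' t) ->
  [/\ k1 = k1', w = w' & forall u, h u = h' u].
Proof.
move=> hw hw' H.
have es : size w = size w'.
  case: (ltngtP (size w) (size w')) => // c; exfalso.
  - have := H (size w); rewrite keyB => e; apply: (@keyA pi' w' k1' h' (size w) hw' c); by rewrite -e.
  - have := H (size w'); rewrite (keyB pi' w' k1' h') => e; apply: (@keyA pi' w k1 h (size w') hw c); by rewrite e.
have eL : Lw pi' w k1 = Lw pi' w' k1'.
  apply: (@eq_from_nth _ (pi', k1)); first by rewrite !size_Lw es.
  move=> t ht.
  have ht' : t < size (Lw pi' w' k1') by rewrite size_Lw -es -(size_Lw pi' w k1).
  by rewrite -(prep_lt h) // H (prep_lt h' (pi', k1)).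
move: (eL); rewrite /Lw => /rcons_inj [e1 e2].
have ew : w = w'.
  apply: (inj_map _ e1) => -[a1 b1] [a2 b2] /= [/catIs' -> ->] //.
split => //.
move=> u; rewrite -(prep_ge (Lw pi' w k1) h u) H eL; exact: prep_ge.
Qed.

Lemma step2 q pi' k0 : W (q :: pi') k0 =
  cp_add (cp_sum 'I_n (fun k1 => cp_act (gmx_star M [:: q] [::] k0 k1) (W pi' k1))) (W [:: q] k0).
Proof.
rewrite starA.
pose g := fun s : JA + Idx => match s with inl z => gA' q pi' k0 z
            | inr z => wt [:: q] k0 (projT1 z) (proj1_sig (projT2 z)) end.
transitivity (cp_sum _ g); last by rewrite sumV_sum.
pose Q := fun s : JA + Idx => match s with
            | inl z => is_true (all (fun e : seq Gamma * 'I_n => e.1 != [::]) (projT1 (projT2 z)))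
            | inr z => forall t, projT1 z t != [::] end.
pose phi := fun s : JA + Idx => match s with inl z => phiA pi' z | inr z => phiB pi' z end.
rewrite /W; apply: (sumV_master (Q := Q) (phi := phi)).
- have hA : forall z1 z2 : JA, Q (inl z1) -> Q (inl z2) -> phiA pi' z1 = phiA pi' z2 -> z1 = z2.
    case=> k1 [w [pis [js h]]] [k1' [w' [pis' [js' h']]]] /= hw hw' e.
    have e1 := congr1 (@projT1 _ _) e; have e2 := congr1 (fun z : Idx => proj1_sig (projT2 z)) e.
    simpl in e1, e2.
    have H : forall t, prep (Lw pi' w k1) (hf pis js) t = prep (Lw pi' w' k1') (hf pis' js') t.
      move=> t; have := congr1 (fun f => f t) e1; have := congr1 (fun f => f t) e2 => /=.
      by case: (prep _ _ t) => a b; case: (prep _ _ t) => a' b' /= -> ->.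
    case: (injA hw hw' H) => ek ew eh; subst k1' w'.
    have ep : pis = pis' by apply: functional_extensionality => u; case: (eh u).
    have ej : js = js' by apply: functional_extensionality => u; case: (eh u).
    subst; by rewrite (proof_irrelevance _ h h').
  have hB : forall z1 z2 : Idx, Q (inr z1) -> Q (inr z2) -> phiB pi' z1 = phiB pi' z2 -> z1 = z2.
    case=> pis [js h] [pis' [js' h']] /= _ _ e.
    have e1 := congr1 (@projT1 _ _) e; have e2 := congr1 (fun z : Idx => proj1_sig (projT2 z)) e.
    simpl in e1, e2; apply: mkIdx_eq => //.
    apply: functional_extensionality => t; apply: (@catIs' _ _ _ pi').
    exact: (congr1 (fun f => f t) e1).
  have hAB : forall z1 z2, Q (inl z1) -> Q (inr z2) -> phiA pi' z1 <> phiB pi' z2.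
    case=> k1 [w [pis [js h]]] [pis' [js' h']] /= hw hw' e.
    have := congr1 (fun z : Idx => projT1 z (size w)) e; rewrite /= keyB /= => e'.
    exact: (@cat_neq (pis' (size w)) pi' (hw' (size w)) (esym e')).
  case=> [z1|z1] [z2|z2] q1 q2 e.
  + congr inl; exact: hA.
  + exfalso; exact: hAB z1 z2 q1 q2 e.
  + exfalso; exact: hAB z2 z1 q2 q1 (esym e).
  + congr inr; exact: hB.
- case=> [[k1 [w [pis [js h]]]] | [pis [js h]]] /= nq.
  + rewrite /gA' /= pathw_zero ?cp_act0l // belast_rcons /=; exact/negP.
  + have [t ht] : exists t, pis t = [::].
      apply: NNPP => no; apply: nq => t; apply/eqP => e; apply: no; by exists t.
    exact: (wt_zero _ _ _ ht).
- case=> pis [js h] H /=.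
  case: (classic (forall t, good pi' (pis t))) => [Hg | Hng].
    exfalso; apply: (H (inr (@mkIdx (fun t => strip pi' (pis t)) js h))).
      move=> t /=; by case: (stripP (Hg t)).
    rewrite /phi /phiB /=; apply: mkIdx_eq => //; apply: functional_extensionality => t.
    by case: (stripP (Hg t)) => _ <-.
  have [t0 [ng0 lt0]] := least_ex (not_all_ex_not _ _ Hng).
  have gt : forall t, t < t0 -> good pi' (pis t) by move=> t lt; apply: NNPP; exact: lt0 t lt.
  case: (classic (pis t0 = pi')) => [e0|ne0].
    exfalso.
    pose w := mkseq (fun t => (strip pi' (pis t), js t)) t0.
    have hw : all (fun e : seq Gamma * 'I_n => e.1 != [::]) w.
      rewrite /w /mkseq all_map; apply/allP => t; rewrite mem_iota add0n => /andP [_ lt] /=.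
      by case: (stripP (gt t lt)).
    have hz := P_l_shift t0.+1 h.
    apply: (H (inl (existT _ (js t0) (existT _ w (@mkIdx (fun u => pis (t0.+1 + u)) _ hz))))) => //=.
    have sw : size w = t0 by rewrite size_mkseq.
    have key : forall t, prep (Lw pi' w (js t0)) (hf (fun u => pis (t0.+1 + u)) (fun u => js (t0.+1 + u))) t
                 = (pis t, js t).
      move=> t; case: (ltngtP t t0) => c.
      - rewrite prep_head ?sw // nth_mkseq //=; by case: (stripP (gt t c)) => _ <-.
      - have et : t = t0.+1 + (t - t0.+1) by lia.
        rewrite [in LHS]et prep_ge'; last by rewrite size_Lw sw.
        by rewrite /hf -et.
      - subst t; have kb := keyB pi' w (js t0) (hf (fun u => pis (t0.+1 + u)) (fun u => js (t0.+1 + u))).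
        by rewrite sw in kb; rewrite kb e0.
    rewrite /phi /phiA /=; apply: mkIdx_eq; apply: functional_extensionality => t; by rewrite key.
  have [c [a' ec]] : exists c a', pthf (q :: pi') pis t0 = c :: a' ++ pi'.
    case: t0 ng0 lt0 gt ne0 => [|t] _ _ gt _; first by exists q, [::].
    case: (gt t (ltnSn t)) => -[|c a'] [ha e] //; by exists c, a'.
  apply: (@iprod_zero _ V _ t0) => /=; rewrite ec.
  case: HM => _ [_ H3]; rewrite H3 //.
  move=> [p [rho [pi'' [[_ e1] e2]]]]; subst pi''.
  apply: ng0; move: e2; rewrite catA; case E: (rho ++ a') => [|x y] e2.
    by exfalso; apply: ne0.
  by exists (x :: y).
- case=> [[k1 [w [pis [js h]]]] | [pis [js h]]] /= hq.
  + rewrite /phiA /gA' /=; exact: wtA.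
  + exact: wtB.
Qed.

Definition Lst (s : seq Gamma) : bmx S n := bmx_lprod (map (fun q => gmx_star M [:: q] [::]) s).

Definition Tsum (p0 : Gamma) (pi : seq Gamma) (k0 : 'I_n) : V :=
  cp_sum {t : nat | t < size pi} (fun t => cp_sum 'I_n (fun k =>
    cp_act (Lst (take (proj1_sig t) pi) k0 k) (W [:: nth p0 pi (proj1_sig t)] k))).

Lemma step4 p0 pi k0 : W pi k0 = Tsum p0 pi k0.
Proof.
elim: pi k0 => [|q pi' IH] k0.
  by rewrite W_nil /Tsum cp_sum_empty // => -[t].
rewrite step2 /Tsum.
pose F := fun t : {t : nat | t < size (q :: pi')} => cp_sum 'I_n (fun k =>
    cp_act (Lst (take (proj1_sig t) (q :: pi')) k0 k) (W [:: nth p0 (q :: pi') (proj1_sig t)] k)).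
have h0 : 0 < size (q :: pi') by [].
have hS : forall t : {t : nat | t < size pi'}, (proj1_sig t).+1 < size (q :: pi') by case.
transitivity (cp_sum (unit + {t : nat | t < size pi'})
  (fun s => F (match s with inl _ => exist _ 0 h0 | inr t => exist _ (proj1_sig t).+1 (hS t) end))); last first.
  symmetry; apply: (sumV_master (Q := fun _ => True)
    (phi := fun s => match s with inl _ => exist _ 0 h0 | inr t => exist _ (proj1_sig t).+1 (hS t) end)) => //.
  - case=> [[]|[t ht]] [[]|[t' ht']] _ _ //= e.
    have := congr1 (@proj1_sig _ _) e => /= -[e']; subst t'.
    congr inr; congr exist; exact: bool_irrelevance.
  - case=> -[|t] ht H; exfalso.
      by apply: (H (inl tt)) => //; congr exist; exact: bool_irrelevance.
    by apply: (H (inr (exist _ t ht))) => //; congr exist; exact: bool_irrelevance.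
rewrite sumV_sum cp_addC cp_sum_unit /F /=.
congr cp_add.
  rewrite (sumV_unique (i0 := k0)) /Lst /= /bmx_one ?eqxx ?cp_act1 // => k nk.
  have -> : (k0 == k) = false by apply/eqP => e; apply: nk.
  exact: cp_act0l.
under [RHS]sumV_congr => t do under sumV_congr => k do
  rewrite /Lst /= -/(Lst _) bmx_mulE cp_sum_actr.
under [LHS]sumV_congr => k1 do rewrite IH /Tsum cp_sum_actl.
rewrite sumV_exchange; apply: sumV_congr => t.
under [LHS]sumV_congr => k1 do rewrite cp_sum_actl.
rewrite sumV_exchange; apply: sumV_congr => k.
apply: sumV_congr => k1; by rewrite cp_actA.
Qed.

Lemma mainW p i : W [:: p] i =
  cp_sum Gamma (fun p' => cp_sum 'I_n (fun k => cp_act (A_M M p p' i k) (W [:: p'] k))).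
Proof.
pose J := {s0 : seq Gamma & {k0 : 'I_n & {t : {t : nat | t < size s0} & 'I_n}}}.
pose I := {p' : Gamma & {k : 'I_n & {x : {x : seq Gamma * nat | (x.2 < size x.1) && (nth p' x.1 x.2 == p')} & 'I_n}}}.
pose gJ := fun z : J => cp_act (M [:: p] (projT1 z) i (projT1 (projT2 z)))
   (cp_act (Lst (take (proj1_sig (projT1 (projT2 (projT2 z)))) (projT1 z)) (projT1 (projT2 z)) (projT2 (projT2 (projT2 z))))
      (W [:: nth p (projT1 z) (proj1_sig (projT1 (projT2 (projT2 z))))] (projT2 (projT2 (projT2 z))))).
pose fI := fun z : I => cp_act (M [:: p] (proj1_sig (projT1 (projT2 (projT2 z)))).1 i (projT2 (projT2 (projT2 z))))
   (cp_act (Lst (take (proj1_sig (projT1 (projT2 (projT2 z)))).2 (proj1_sig (projT1 (projT2 (projT2 z)))).1)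
              (projT2 (projT2 (projT2 z))) (projT1 (projT2 z)))
      (W [:: projT1 z] (projT1 (projT2 z)))).
transitivity (cp_sum J gJ).
  rewrite step1 [RHS]cp_sum_sigma; apply: sumV_congr => pi.
  rewrite [RHS]cp_sum_sigma; apply: sumV_congr => k0.
  rewrite (step4 p) /Tsum cp_sum_actl [RHS]cp_sum_sigma; apply: sumV_congr => t.
  rewrite cp_sum_actl; apply: sumV_congr => k //.
transitivity (cp_sum I fI); last first.
  rewrite [LHS]cp_sum_sigma; apply: sumV_congr => p'.
  rewrite [LHS]cp_sum_sigma; apply: sumV_congr => k.
  rewrite /A_M cp_sum_actr [LHS]cp_sum_sigma; apply: sumV_congr => x.
  rewrite bmx_mulE cp_sum_actr; apply: sumV_congr => k0 /=.
  by rewrite /fI /= cp_actA.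
have hx : forall z : J, let x := (projT1 z, proj1_sig (projT1 (projT2 (projT2 z)))) in
   (x.2 < size x.1) && (nth (nth p x.1 x.2) x.1 x.2 == nth p x.1 x.2).
  case=> pi [k0 [[t ht] k]] /=; rewrite ht /=.
  by rewrite (set_nth_default p) // eqxx.
pose phi : J -> I := fun z =>
  let p' := nth p (projT1 z) (proj1_sig (projT1 (projT2 (projT2 z)))) in
  existT _ p' (existT _ (projT2 (projT2 (projT2 z)))
    (existT _ (exist (fun x : seq Gamma * nat => (x.2 < size x.1) && (nth p' x.1 x.2 == p'))
                     (projT1 z, proj1_sig (projT1 (projT2 (projT2 z)))) (hx z)) (projT1 (projT2 z)))).
symmetry; apply: (sumV_master (Q := fun _ => True) (phi := phi)) => //.
- case=> s0 [k0 [[t ht] k]] [s0' [k0' [[t' ht'] k']]] _ _ e.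
  rewrite /phi /= in e.
  have e1 := congr1 (fun z : I => proj1_sig (projT1 (projT2 (projT2 z)))) e.
  have e2 := congr1 (fun z : I => projT1 (projT2 z)) e.
  have e3 := congr1 (fun z : I => projT2 (projT2 (projT2 z))) e.
  simpl in e1, e2, e3; case: e1 => ? ?; subst.
  congr existT; congr existT; congr existT; congr exist; exact: bool_irrelevance.
- case=> p' [k [[[s0 t] hxy] k0]] H; exfalso.
  move: (hxy) => /andP [ht hn].
  have ep : nth p s0 t = p' by rewrite (set_nth_default p') //; exact/eqP.
  apply: (H (existT _ s0 (existT _ k0 (existT _ (exist _ t ht) k)))) => //.
  rewrite /phi /=; subst p'.
  congr existT; congr existT; congr existT; congr exist; exact: bool_irrelevance.
Qed.

End PD.

Theorem theorem8 (S : csemiring) (V : cpair S) (S' : S -> Prop)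
  (HS'0 : S' (cs_zero S)) (HS'1 : S' (cs_one S))
  (n : nat) (Hn : 0 < n) (Gamma : finType) (M : gmx S Gamma n)
  (HM' : forall pi1 pi2 i j, S' (M pi1 pi2 i j))
  (HM : is_pushdown_transition_matrix M) :
  forall l : nat, l <= n ->
  forall (p : Gamma) (i : 'I_n),
    M_omega V M l [:: p] i
    = fsumV V (fun p' : Gamma =>
        fsumV V (fun k : 'I_n => cp_act (A_M M p p' i k) (M_omega V M l [:: p'] k))).
Proof.
move=> l _ p i.
rewrite WE (@mainW _ V _ _ M HM) fsumV_sum; apply: sumV_congr => p'.
rewrite fsumV_sum; apply: sumV_congr => k.
by rewrite WE.
Qed.
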